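(* Let $\{\mathcal{N}_t\}_{t=1}^h$ be a time series of power network descriptions as in the context, sharing the same private line conductances $\mathbf{g}\in\mathbb{R}^n$ and susceptances $\mathbf{b}\in\mathbb{R}^n$. Fix $\alpha>0$, $\epsilon>0$, $\beta>0$, $\lambda>0$. Then the Multi-step Power Lines Obfuscation (MPLO) mechanism described in the context, viewed as a randomized algorithm mapping the private line-parameter data to the released network descriptions $\{\dot{\mathcal{N}}_t\}_{t=1}^h$, is $\epsilon$-differentially private with respect to the $\alpha$-indistinguishability adjacency relation.
   Context: Each $\mathcal{N}_t$ ($t=1,\dots,h$) has the same buses $N$, the same $n$ directed lines $E$ (with reversals $E^R$), the same line admittances $Y_{ij}=g_{ij}+\mathbf{i}b_{ij}$, and the same public bounds (voltage bounds $v^l_i,v^u_i$, generator bounds $S^{gl}_i,S^{gu}_i$, angle limits $\theta^\Delta_{ij}$, thermal limits $s^u_{ij}$, cost coefficients $c_{0i},c_{1i},c_{2i}$, slack bus $s$), but time-dependent public demands $S^d_i(t)$; $O^*(t)>0$ is the public optimal AC-OPF cost of $\mathcal{N}_t$. The ratio vector $\mathbf r=(r_{ij})$ and the partition of lines by voltage level ($E(v)$, $n_v=|E(v)|$, each line in exactly one $E(v)$) are public. $\mathrm{cost}(S^g_i)=c_{2i}(\Re S^g_i)^2+c_{1i}\Re S^g_i+c_{0i}$. $\mathrm{Lap}(\lambda')$ has density $\frac{1}{2\lambda'}e^{-|x|/\lambda'}$. Differential privacy: private datasets (line-parameter vectors) $D\sim_\alpha D'$ if they differ in a single coordinate by at most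 $\alpha$ and agree elsewhere; $\mathcal{A}$ is $\epsilon$-DP if $\Pr[\mathcal{A}(D)\in O]\le e^\epsilon\Pr[\mathcal{A}(D')\in O]$ for all such $D,D'$ and measurable $O$. MPLO mechanism (independent noise): 1. $\tilde{\mathbf g}=\mathbf g+\mathrm{Lap}(3\alpha/\epsilon)^n$; 2. $\tilde b_{ij}=r_{ij}\tilde g_{ij}$; 3. for each voltage level $v$: $\tilde\mu^v_{\mathbf g}=\frac1{n_v}\sum_{E(v)}g_{ij}+\mathrm{Lap}(3\alpha/(n_v\epsilon))$, $\tilde\mu^v_{\mathbf b}=\frac1{n_v}\sum_{E(v)}b_{ij}+\mathrm{Lap}(3\alpha/(n_v\epsilon))$; 4. solve (selecting a solution by any fixed rule), with variables $\dot Y_{ij}=\dot g_{ij}+\mathbf i\dot b_{ij}$ and, for each $t$, $S^g_i(t),V_i(t),S_{ij}(t)$: minimize $\|\dot{\mathbf g}-\tilde{\mathbf g}\|_2^2+\|\dot{\mathbf b}-\tilde{\mathbf b}\|_2^2$ subject to $\tilde\mu^v_{\mathbf g}/\lambda\le\dot g_{ij}\le\lambda\tilde\mu^v_{\mathbf g}$ and $\tilde\mu^v_{\mathbf b}/\lambda\le\dot b_{ij}\le\lambda\tilde\mu^v_{\mathbf b}$ for lines at level $v$, and for every $t$: $\frac{|\sum_i\mathrm{cost}(S^g_i(t))-O^*(t)|}{O^*(t)}\le\beta$, $\angle V_s(t)=0$, $v^l_i\le|V_i(t)|\le v^u_i$, $S^{gl}_i\le S^g_i(t)\le S^{gu}_i$,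 $S^g_i(t)-S^d_i(t)=\sum_{(i,j)\in E\cup E^R}S_{ij}(t)$, $-\theta^\Delta_{ij}\le\angle(V_i(t)V_j^*(t))\le\theta^\Delta_{ij}$, $|S_{ij}(t)|\le s^u_{ij}$, $S_{ij}(t)=\dot Y^*_{ij}|V_i(t)|^2-\dot Y^*_{ij}V_i(t)V_j^*(t)$. Output: for each $t$, $\dot{\mathcal N}_t$ equal to $\mathcal N_t$ with admittances replaced by $\dot Y$. *)

(* Defs.v *)
From HB Require Import structures.
From mathcomp Require Import all_boot all_order all_algebra.
From mathcomp Require Import all_classical all_reals all_analysis.
From mathcomp Require Import complex.
Set Implicit Arguments. Unset Strict Implicit. Unset Printing Implicit Defensive.
Import Order.TTheory GRing.Theory Num.Theory.
Local Open Scope ring_scope.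
Local Open Scope classical_set_scope.

Definition cmod (R : realType) (z : R[i]) : R :=
  Num.sqrt (complex.Re z ^+ 2 + complex.Im z ^+ 2).

(* principal argument in (-pi, pi], with the convention arg 0 = 0 *)
Definition carg (R : realType) (z : R[i]) : R :=
  if z == 0 then 0
  else if 0 <= complex.Im z then acos (complex.Re z / cmod z)
  else - acos (complex.Re z / cmod z).

(* componentwise order on complex numbers (real and reactive parts),
   as used for the generator bounds  S^gl <= S^g <= S^gu *)
Definition cle (R : realType) (z w : R[i]) : Prop :=
  complex.Re z <= complex.Re w /\ complex.Im z <= complex.Im w.

(* Public data of the time series N_1..N_h.                                 *)
(*  buses 'I_N, directed lines 'I_n (line e goes from fr e to tt e;         *)
(*  its reversal is (tt e, fr e)), voltage levels 'I_m (lev e = level of e),*)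
(*  time steps 'I_h.                                                        *)
Record pubnet (R : realType) (N n m h : nat) := PubNet {
  fr : 'I_n -> 'I_N;
  tt : 'I_n -> 'I_N;
  vl : 'I_N -> R;
  vu : 'I_N -> R;
  Sgl : 'I_N -> R[i];
  Sgu : 'I_N -> R[i];
  thD : 'I_n -> R;
  su : 'I_n -> R;
  c0 : 'I_N -> R;
  c1 : 'I_N -> R;
  c2 : 'I_N -> R;
  slack : 'I_N;
  Sd : 'I_h -> 'I_N -> R[i];
  Ostar : 'I_h -> R;         (* optimal AC-OPF cost O*(t) *)
  ratio : 'I_n -> R;
  lev : 'I_n -> 'I_m
}.

Section MPLO.
Variables (R : realType) (N n m h : nat) (P : pubnet R N n m h).

Definition nlev (v : 'I_m) : nat := #|[set e | lev P e == v]|.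

Definition gcost (i : 'I_N) (Sg : R[i]) : R :=
  c2 P i * (complex.Re Sg) ^+ 2 + c1 P i * complex.Re Sg + c0 P i.

(* The AC-OPF constraints of time step t for admittances Y (the existential
   quantifies the per-step variables S^g(t), V(t), S_ij(t) for (i,j) in E
   (Sf) and for the reversed lines in E^R (Sr)). *)
Definition opf_feasible (beta : R) (t : 'I_h) (Y : 'I_n -> R[i]) : Prop :=
  exists (Sg V : 'I_N -> R[i]) (Sf Sr : 'I_n -> R[i]),
    `|(\sum_(i < N) gcost i (Sg i)) - Ostar P t| / Ostar P t <= beta
    /\ carg (V (slack P)) = 0
    /\ (forall i, vl P i <= cmod (V i) <= vu P i)
    /\ (forall i, cle (Sgl P i) (Sg i) /\ cle (Sg i) (Sgu P i))
    /\ (forall i, Sg i - Sd P t i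
                  = \sum_(e < n | fr P e == i) Sf e + \sum_(e < n | tt P e == i) Sr e)
    /\ (forall e, - thD P e <= carg (V (fr P e) * (V (tt P e))^*) <= thD P e)
    /\ (forall e, cmod (Sf e) <= su P e /\ cmod (Sr e) <= su P e)
    /\ (forall e, Sf e = (Y e)^* * (((cmod (V (fr P e))) ^+ 2)%:C)%C
                         - (Y e)^* * V (fr P e) * (V (tt P e))^*)
    /\ (forall e, Sr e = (Y e)^* * (((cmod (V (tt P e))) ^+ 2)%:C)%C
                         - (Y e)^* * V (tt P e) * (V (fr P e))^*).

(* Feasible set of the step-4 problem, for noisy level means mug, mub. *)
Definition mplo_feasible (beta lam : R) (mug mub : m.-tuple R)
    (Yd : n.-tuple R * n.-tuple R) : Prop :=
  (forall e : 'I_n,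
      tnth mug (lev P e) / lam <= tnth Yd.1 e <= lam * tnth mug (lev P e)
   /\ tnth mub (lev P e) / lam <= tnth Yd.2 e <= lam * tnth mub (lev P e))
  /\ (forall t : 'I_h,
        opf_feasible beta t (fun e => Complex (tnth Yd.1 e) (tnth Yd.2 e))).

Definition mplo_obj (gt bt : n.-tuple R) (Yd : n.-tuple R * n.-tuple R) : R :=
  \sum_(e < n) (tnth Yd.1 e - tnth gt e) ^+ 2
  + \sum_(e < n) (tnth Yd.2 e - tnth bt e) ^+ 2.

Definition mplo_optimal (beta lam : R) (gt bt : n.-tuple R) (mug mub : m.-tuple R)
    (Yd : n.-tuple R * n.-tuple R) : Prop :=
  mplo_feasible beta lam mug mub Yd
  /\ forall Yd', mplo_feasible beta lam mug mub Yd' ->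
                 mplo_obj gt bt Yd <= mplo_obj gt bt Yd'.

(* A "fixed selection rule" for step 4: a function of the noisy inputs
   that returns an optimal solution whenever one exists (arbitrary, but
   fixed, output otherwise). *)
Definition selection_rule (beta lam : R)
    (sel : n.-tuple R -> n.-tuple R -> m.-tuple R -> m.-tuple R ->
           n.-tuple R * n.-tuple R) : Prop :=
  forall gt bt mug mub,
    (exists Yd, mplo_optimal beta lam gt bt mug mub Yd) ->
    mplo_optimal beta lam gt bt mug mub (sel gt bt mug mub).

(* Noise space: (noise on g) * (noise on level means of g) * (of b). *)
Definition noise_space := ((n.-tuple R * m.-tuple R) * m.-tuple R)%type.

(* The MPLO mechanism as a deterministic function of the private data
   (g, b) and of the noise z; output = (gdot, bdot), i.e. the admittances
   Ydot = gdot + i bdot that replace Y in every released N_t. *)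
Definition mplo_out
    (sel : n.-tuple R -> n.-tuple R -> m.-tuple R -> m.-tuple R ->
           n.-tuple R * n.-tuple R)
    (D : n.-tuple R * n.-tuple R) (z : noise_space) : n.-tuple R * n.-tuple R :=
  let g := D.1 in let b := D.2 in
  let gt := [tuple tnth g e + tnth z.1.1 e | e < n] in
  let bt := [tuple ratio P e * tnth gt e | e < n] in
  let mug := [tuple (nlev v)%:R^-1 * (\sum_(e < n | lev P e == v) tnth g e)
                    + tnth z.1.2 v | v < m] in
  let mub := [tuple (nlev v)%:R^-1 * (\sum_(e < n | lev P e == v) tnth b e)
                    + tnth z.2 v | v < m] in
  sel gt bt mug mub.

End MPLO.

Definition lap_pdf (R : realType) (lam' x : R) : R :=
  (2 * lam')^-1 * expR (- (`|x| / lam')).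

Fixpoint iint (R : realType) (k : nat) : (k.-tuple R -> \bar R) -> \bar R :=
  match k return (k.-tuple R -> \bar R) -> \bar R with
  | 0 => fun F => F [tuple]
  | k'.+1 => fun F =>
      (\int[@lebesgue_measure R]_x iint (fun t => F (cons_tuple x t)))%E
  end.

Definition mplo_noise_prob (R : realType) (N n m h : nat) (P : pubnet R N n m h)
    (alpha eps : R) (E : set (noise_space R n m)) : \bar R :=
  iint (fun zg => iint (fun zmg => iint (fun zmb =>
    ((\1_E ((zg, zmg, zmb) : noise_space R n m))
     * (\prod_(e < n) lap_pdf (3 * alpha / eps) (tnth zg e))
     * (\prod_(v < m) lap_pdf (3 * alpha / ((nlev P v)%:R * eps)) (tnth zmg v))
     * (\prod_(v < m) lap_pdf (3 * alpha / ((nlev P v)%:R * eps)) (tnth zmb v)))%:E))).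

Definition alpha_adj (R : realType) (n : nat) (alpha : R)
    (D D' : n.-tuple R * n.-tuple R) : Prop :=
  (exists e : 'I_n, `|tnth D.1 e - tnth D'.1 e| <= alpha
      /\ (forall e', e' != e -> tnth D.1 e' = tnth D'.1 e') /\ D.2 = D'.2)
  \/
  (exists e : 'I_n, `|tnth D.2 e - tnth D'.2 e| <= alpha
      /\ (forall e', e' != e -> tnth D.2 e' = tnth D'.2 e') /\ D.1 = D'.1).

Definition differentially_private (R : realType) (d : measure_display)
    (Noise : measurableType d) (Data Out : Type)
    (adj : Data -> Data -> Prop) (eps : R) (Pr : set Noise -> \bar R)
    (M : Data -> Noise -> Out) : Prop :=
  forall D D', adj D D' ->
  forall O : set Out,
    measurable (M D @^-1` O) -> measurable (M D' @^-1` O) ->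
    (Pr (M D @^-1` O) <= (expR eps)%:E * Pr (M D' @^-1` O))%E.

(* Main.v *)
Require Import Defs.
From HB Require Import structures.
From mathcomp Require Import all_boot all_order all_algebra.
From mathcomp Require Import all_classical all_reals all_analysis.
From mathcomp Require Import complex.
From mathcomp Require Import ring lra.
Import Order.TTheory GRing.Theory Num.Theory.
Local Open Scope ring_scope.
Local Open Scope classical_set_scope.


Section Shift.
Context {R : realType}.
Local Notation LT := (measurableTypeR R).
Local Notation mu := (@lebesgue_measure R).

Definition shiftR (a : R) : R -> R := fun x => x + a.

Lemma measurable_shiftR a : measurable_fun [set: R] (shiftR a).
Proof.
have := @measurable_realfun.measurable_funD _ _ R setT idfun (cst a).
by move=> H; apply: H => //; exact: measurable_id.
Qed.

Lemma preimage_shift_oc a x y : shiftR a @^-1` `]x, y] = `]x - a, y - a].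
Proof.
apply/seteqP; split => z /=; rewrite /shiftR !in_itv /= ?ltrBlDr ?lerBrDr //.
Qed.

Lemma lebesgue_shift a (A : set R) : measurable A ->
  lebesgue_measure (shiftR a @^-1` A) = lebesgue_measure A.
Proof.
move=> mA.
unshelve epose proof (@lebesgue_measure_unique R (pushforward (@lebesgue_measure R) (shiftR a : _ -> measurableTypeR R))) as H.
  exact: measurable_shiftR.
apply/esym; apply: H => //.
move=> _ [[x y] _ <-]; rewrite /pushforward /=.
have E := preimage_shift_oc a x y.
unfold pushforward; rewrite E.
rewrite !lebesgue_measure_itv /= !lte_fin ltrD2r.
case: ifP => // _; rewrite -!EFinD; congr (_%:E); ring.
Qed.

Import HBNNSimple.

Definition hshift (h : {nnsfun LT >-> R}) (a : R) : LT -> R := h \o shiftR a.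

Lemma hshift_mfun h a : measurable_fun [set: LT] (hshift h a).
Proof. apply: measurableT_comp => //; exact: measurable_shiftR. Qed.

HB.instance Definition _ h a := isMeasurableFun.Build _ _ _ _ (hshift h a) (hshift_mfun h a).

Lemma hshift_fin h a : finite_set (range (hshift h a)).
Proof.
apply: (sub_finite_set _ (fimfunP h)) => _ [x _ <-]; exists (shiftR a x) => //.
Qed.

HB.instance Definition _ h a := FiniteImage.Build _ _ (hshift h a) (hshift_fin h a).

Lemma hshift_ge0 h a : forall x, 0 <= hshift h a x.
Proof. by move=> x; rewrite /hshift /=; exact: fun_ge0. Qed.

HB.instance Definition _ h a := isNonNegFun.Build _ _ (hshift h a) (hshift_ge0 h a).

Definition hshift_nnsfun h a : {nnsfun LT >-> R} := hshift h a.

Lemma sintegral_hshift h a : sintegral mu (hshift_nnsfun h a) = sintegral mu h.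
Proof.
rewrite !sintegralET; apply: eq_fsbigr => r _; congr (_ * _)%E.
rewrite -[LHS]/(lebesgue_measure (shiftR a @^-1` (h @^-1` [set r]))).
rewrite lebesgue_shift //.
have := measurable_funP h measurableT [set r] (measurable_set1 r).
by rewrite setTI.
Qed.


Local Open Scope ereal_scope.

Lemma int_le (f g : LT -> \bar R) : (forall x, 0 <= f x) -> (forall x, f x <= g x) ->
  \int[mu]_x f x <= \int[mu]_x g x.
Proof.
move=> f0 fg; have g0 x : 0 <= g x by apply: le_trans (f0 x) (fg x).
rewrite !ge0_integralTE//; apply: ereal_sup_le => _ [h hf <-].
by exists h => // x; apply: le_trans (hf x) (fg x).
Qed.

Lemma int_scale (c : R) (f : LT -> \bar R) : (0 < c)%R -> (forall x, 0 <= f x) ->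
  \int[mu]_x (c%:E * f x) <= c%:E * \int[mu]_x f x.
Proof.
move=> c0 f0; have cf0 x : 0 <= c%:E * f x by rewrite mule_ge0// lee_fin ltW.
rewrite !ge0_integralTE//; apply: ge_ereal_sup => _ [h hf <-].
have ci0 : (0 <= c^-1)%R by rewrite invr_ge0 ltW.
pose h' := scale_nnsfun h ci0.
have E : sintegral mu h = c%:E * sintegral mu h'.
  rewrite /h' /scale_nnsfun /= sintegralrM muleA -EFinM divff ?mul1e //.
  by rewrite gt_eqF.
rewrite E lee_pmul2l ?lte_fin //; apply: ereal_sup_ubound; exists h' => //= x.
rewrite /h' /= -(@lee_pmul2l _ c%:E) ?lte_fin // -EFinM mulrA divff ?mul1r ?gt_eqF //.
Qed.

Lemma int_shift_le (a : R) (f : LT -> \bar R) : (forall x, 0 <= f x) ->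
  \int[mu]_x f (x + a)%R <= \int[mu]_x f x.
Proof.
move=> f0; rewrite !ge0_integralTE//; apply: ge_ereal_sup => _ [h hf <-].
rewrite -(sintegral_hshift h (- a)%R); apply: ereal_sup_ubound.
exists (hshift_nnsfun h (- a)%R) => // x /=.
rewrite /hshift /= /shiftR; have := hf (x - a)%R; by rewrite subrK.
Qed.

Lemma int_shift (a : R) (f : LT -> \bar R) : (forall x, 0 <= f x) ->
  \int[mu]_x f (x + a)%R = \int[mu]_x f x.
Proof.
move=> f0; apply/eqP; rewrite eq_le int_shift_le //=.
have := @int_shift_le (- a)%R (fun x => f (x + a)%R) (fun x => f0 _).
by under eq_integral do rewrite subrK.
Qed.

End Shift.


Section Iint.
Context {R : realType}.
Local Open Scope ereal_scope.

Definition tadd {k} (t a : k.-tuple R) : k.-tuple R := [tuple (tnth t i + tnth a i)%R | i < k].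

Lemma tadd_cons k x (t : k.-tuple R) (a : k.+1.-tuple R) :
  tadd (cons_tuple x t) a = cons_tuple (x + thead a)%R (tadd t [tuple of behead a]).
Proof.
set a0 := thead a; set a' := [tuple of behead a].
have Ea : a = cons_tuple a0 a' := tuple_eta a.
rewrite {1}Ea.
apply: eq_from_tnth => i; case: (unliftP ord0 i) => [j ->|->].
  by rewrite /tadd !(tnthS, tnth0, tnth_mktuple).
by rewrite /tadd !(tnthS, tnth0, tnth_mktuple).
Qed.

Lemma iint_ge0 k (F : k.-tuple R -> \bar R) : (forall t, 0 <= F t) -> 0 <= iint F.
Proof.
elim: k F => [|k IH] F F0 /=; first exact: F0.
by apply: integral_ge0 => x _; apply: IH.
Qed.

Lemma iint_le k (F G : k.-tuple R -> \bar R) : (forall t, 0 <= F t) ->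
  (forall t, F t <= G t) -> iint F <= iint G.
Proof.
elim: k F G => [|k IH] F G F0 FG /=; first exact: FG.
apply: int_le => x; first by apply: iint_ge0.
by apply: IH.
Qed.

Lemma iint_scale k (c : R) (F : k.-tuple R -> \bar R) : (0 < c)%R ->
  (forall t, 0 <= F t) -> iint (fun t => c%:E * F t) <= c%:E * iint F.
Proof.
move=> c0; elim: k F => [|k IH] F F0 /=; first by [].
apply: (@le_trans _ _ (\int[lebesgue_measure]_x (c%:E * iint (fun t => F (cons_tuple x t))))); last first.
  by apply: int_scale => // x; apply: iint_ge0.
apply: int_le => x; first by apply: iint_ge0 => t; rewrite mule_ge0 // lee_fin ltW.
by apply: IH.
Qed.

Lemma iint_shift k (a : k.-tuple R) (F : k.-tuple R -> \bar R) :
  (forall t, 0 <= F t) -> iint (fun t => F (tadd t a)) = iint F.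
Proof.
elim: k a F => [|k IH] a F F0 /=.
  by congr F; apply: eq_from_tnth => -[].
under eq_integral do under eq_fun do rewrite tadd_cons.
under eq_integral do rewrite (IH _ (fun t => F (cons_tuple _ t))) //.
by rewrite (int_shift (thead a) (fun x => iint (fun t => F (cons_tuple x t)))) // => x; apply: iint_ge0.
Qed.

End Iint.


Section Lap.
Context {R : realType}.

Lemma lap_ge0 (l x : R) : 0 < l -> 0 <= lap_pdf l x.
Proof. by move=> l0; rewrite /lap_pdf mulr_ge0 ?expR_ge0 // invr_ge0 mulr_ge0 // ltW. Qed.

Lemma lap_shift (l x s : R) : 0 < l ->
  lap_pdf l x <= expR (`|s| / l) * lap_pdf l (x + s).
Proof.
move=> l0; rewrite /lap_pdf mulrCA; apply: ler_wpM2l.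
  by rewrite invr_ge0 mulr_ge0 // ltW.
rewrite -expRD ler_expR -!mulNr -mulrDl; apply: ler_wpM2r; first by rewrite invr_ge0 ltW.
have := ler_normD x s; lra.
Qed.

Lemma prod_lap_shift k (l : 'I_k -> R) (z s : k.-tuple R) : (forall i, 0 < l i) ->
  \prod_(i < k) lap_pdf (l i) (tnth z i) <=
  expR (\sum_(i < k) `|tnth s i| / l i) * \prod_(i < k) lap_pdf (l i) (tnth (tadd z s) i).
Proof.
move=> l0; rewrite expR_sum -big_split /=; apply: ler_prod => i _.
by rewrite lap_ge0 //= tnth_mktuple lap_shift.
Qed.

End Lap.

Section Iint3.
Context {R : realType} {n m : nat}.
Local Open Scope ereal_scope.

Definition iint3 (F : n.-tuple R -> m.-tuple R -> m.-tuple R -> \bar R) :=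
  iint (fun a => iint (fun b => iint (fun c => F a b c))).

Lemma iint3_le F G : (forall a b c, 0 <= F a b c) -> (forall a b c, F a b c <= G a b c) ->
  iint3 F <= iint3 G.
Proof.
move=> F0 FG; apply: iint_le => [a|a]; first by do 2 (apply: iint_ge0 => ?).
apply: iint_le => [b|b]; first by apply: iint_ge0.
by apply: iint_le.
Qed.

Lemma iint3_scale (c : R) F : (0 < c)%R -> (forall a b c, 0 <= F a b c) ->
  iint3 (fun a b d => c%:E * F a b d) <= c%:E * iint3 F.
Proof.
move=> c0 F0; rewrite /iint3.
apply: (@le_trans _ _ (iint (fun a => c%:E * iint (fun b => iint (fun d => F a b d))))); last first.
  by apply: iint_scale => // a; do 2 (apply: iint_ge0 => ?).
apply: iint_le => [a|a]; first by do 2 (apply: iint_ge0 => ?); rewrite mule_ge0 // lee_fin ltW.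
apply: (@le_trans _ _ (iint (fun b => c%:E * iint (fun d => F a b d)))); last first.
  by apply: iint_scale => // b; apply: iint_ge0.
apply: iint_le => [b|b]; first by apply: iint_ge0 => ?; rewrite mule_ge0 // lee_fin ltW.
by apply: iint_scale.
Qed.

Lemma iint3_shift s1 s2 s3 F : (forall a b c, 0 <= F a b c) ->
  iint3 (fun a b c => F (tadd a s1) (tadd b s2) (tadd c s3)) = iint3 F.
Proof.
move=> F0; rewrite /iint3.
have -> : (fun a => iint (fun b => iint (fun c => F (tadd a s1) (tadd b s2) (tadd c s3)))) =
          (fun a => iint (fun b => iint (fun c => F (tadd a s1) b c))).
  apply/funext => a.
  have -> : (fun b => iint (fun c => F (tadd a s1) (tadd b s2) (tadd c s3))) =
            (fun b => iint (fun c => F (tadd a s1) (tadd b s2) c)).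
    by apply/funext => b; rewrite (iint_shift _ s3 (F (tadd a s1) (tadd b s2))).
  by rewrite (iint_shift _ s2 (fun b => iint (fun c => F (tadd a s1) b c))) // => b; apply: iint_ge0.
rewrite (iint_shift _ s1 (fun a => iint (fun b => iint (fun c => F a b c)))) //.
by move=> a; do 2 (apply: iint_ge0 => ?).
Qed.

End Iint3.


Theorem theorem5 (R : realType) (N n m h : nat) (P : pubnet R N n m h)
    (alpha eps beta lam : R)
    (sel : n.-tuple R -> n.-tuple R -> m.-tuple R -> m.-tuple R ->
           n.-tuple R * n.-tuple R) :
  (forall t, 0 < Ostar P t) ->
  (forall v : 'I_m, exists e : 'I_n, lev P e = v) ->
  0 < alpha -> 0 < eps -> 0 < beta -> 0 < lam ->
  selection_rule P beta lam sel ->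
  differentially_private (alpha_adj alpha) eps
    (mplo_noise_prob P alpha eps) (mplo_out P sel).
Proof.
move=> _ levh a0 e0 _ _ _ D D' adj O _ _.
pose mean (x : n.-tuple R) (v : 'I_m) :=
  (nlev P v)%:R^-1 * (\sum_(e < n | lev P e == v) tnth x e).
pose s1 : n.-tuple R := [tuple tnth D.1 i - tnth D'.1 i | i < n].
pose s2 : m.-tuple R := [tuple mean D.1 v - mean D'.1 v | v < m].
pose s3 : m.-tuple R := [tuple mean D.2 v - mean D'.2 v | v < m].
have Hout zg zmg zmb : mplo_out P sel D (zg, zmg, zmb) =
    mplo_out P sel D' (tadd zg s1, tadd zmg s2, tadd zmb s3).
  rewrite /mplo_out /=.
  have Egt : [tuple tnth D.1 e + tnth zg e | e < n] =
             [tuple tnth D'.1 e + tnth (tadd zg s1) e | e < n].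
    apply: eq_from_tnth => i; rewrite !tnth_mktuple. ring.
  rewrite Egt; congr sel.
    apply: eq_from_tnth => v; rewrite !tnth_mktuple /mean; ring.
  apply: eq_from_tnth => v; rewrite !tnth_mktuple /mean; ring.
have nvP v : (0 < nlev P v)%N.
  have [e He] := levh v; apply/card_gt0P; exists e; rewrite inE; apply/eqP.
  by [].
pose l1 : R := 3 * alpha / eps.
pose l2 (v : 'I_m) : R := 3 * alpha / ((nlev P v)%:R * eps).
have l1P : 0 < l1 by rewrite /l1 divr_gt0 // mulr_gt0.
have l2P v : 0 < l2 v by rewrite /l2 divr_gt0 ?mulr_gt0 ?ltr0n.
have mean_bd (x y : n.-tuple R) :
    \sum_(v < m) `|mean x v - mean y v| / l2 v <=
    \sum_(e < n) `|tnth x e - tnth y e| / l1.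
  have Ev v : `|mean x v - mean y v| / l2 v =
      `|\sum_(e < n | lev P e == v) (tnth x e - tnth y e)| / l1.
    rewrite /mean -mulrBr -sumrB normrM ger0_norm ?invr_ge0 ?ler0n //.
    have nv0 : (nlev P v)%:R != 0 :> R by rewrite pnatr_eq0 -lt0n.
    rewrite /l2 /l1; field.
    by rewrite nv0 /= !gt_eqF.
  rewrite (eq_bigr _ (fun v _ => Ev v)) -mulr_suml.
  rewrite [X in _ <= X](partition_big (fun e => lev P e) predT) //=.
  under [X in _ <= X]eq_bigr do rewrite -mulr_suml.
  rewrite -mulr_suml.
  apply: ler_wpM2r; first by rewrite invr_ge0 ltW.
  by apply: ler_sum => v _; apply: ler_norm_sum.
pose A := \sum_(e < n) `|tnth D.1 e - tnth D'.1 e|.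
pose B := \sum_(e < n) `|tnth D.2 e - tnth D'.2 e|.
have A0 : 0 <= A by apply: sumr_ge0 => *.
have B0 : 0 <= B by apply: sumr_ge0 => *.
have AB : A + B <= alpha.
  case: adj => [[e [He [Ho E2]]]|[e [He [Ho E1]]]].
    have -> : B = 0 by rewrite /B big1 // => i _; rewrite E2 subrr normr0.
    rewrite addr0 /A (bigD1 e) //= big1 ?addr0 // => i ie.
    by rewrite Ho // subrr normr0.
  have -> : A = 0 by rewrite /A big1 // => i _; rewrite E1 subrr normr0.
  rewrite add0r /B (bigD1 e) //= big1 ?addr0 // => i ie.
  by rewrite Ho // subrr normr0.
have X1E : \sum_(i < n) `|tnth s1 i| / l1 = A / l1.
  by rewrite -mulr_suml; congr (_ * _); apply: eq_bigr => i _; rewrite tnth_mktuple.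
have X2E : \sum_(v < m) `|tnth s2 v| / l2 v <= A / l1.
  rewrite (eq_bigr (fun v => `|mean D.1 v - mean D'.1 v| / l2 v)); last first.
    by move=> v _; rewrite tnth_mktuple.
  by rewrite /A mulr_suml; apply: mean_bd.
have X3E : \sum_(v < m) `|tnth s3 v| / l2 v <= B / l1.
  rewrite (eq_bigr (fun v => `|mean D.2 v - mean D'.2 v| / l2 v)); last first.
    by move=> v _; rewrite tnth_mktuple.
  by rewrite /B mulr_suml; apply: mean_bd.
have Xtot : A / l1 + \sum_(v < m) `|tnth s2 v| / l2 v + \sum_(v < m) `|tnth s3 v| / l2 v <= eps.
  have c0 : 0 < l1^-1 by rewrite invr_gt0.
  have c3 : l1^-1 * (3 * alpha) = eps.
    rewrite /l1; field; by rewrite !gt_eqF.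
  apply: (@le_trans _ _ ((A + A + B) * l1^-1)).
    by rewrite !mulrDl; apply: lerD => //; apply: lerD.
  rewrite -c3 mulrC; apply: ler_wpM2l; first exact: ltW.
  lra.
pose dens (zg : n.-tuple R) (zmg zmb : m.-tuple R) : R :=
  (\prod_(e < n) lap_pdf (3 * alpha / eps) (tnth zg e))
  * (\prod_(v < m) lap_pdf (3 * alpha / ((nlev P v)%:R * eps)) (tnth zmg v))
  * (\prod_(v < m) lap_pdf (3 * alpha / ((nlev P v)%:R * eps)) (tnth zmb v)).
have dens0 zg zmg zmb : 0 <= dens zg zmg zmb.
  rewrite /dens; apply: mulr_ge0; first apply: mulr_ge0.
  - by apply: prodr_ge0 => i _; exact: (@lap_ge0 R l1 _ l1P).
  - by apply: prodr_ge0 => i _; exact: (@lap_ge0 R (l2 i) _ (l2P i)).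
  - by apply: prodr_ge0 => i _; exact: (@lap_ge0 R (l2 i) _ (l2P i)).
have densB zg zmg zmb : dens zg zmg zmb <=
    expR eps * dens (tadd zg s1) (tadd zmg s2) (tadd zmb s3).
  have Hp1 := @prod_lap_shift R n (fun _ => l1) zg s1 (fun _ => l1P).
  have Hp2 := @prod_lap_shift R m l2 zmg s2 l2P.
  have Hp3 := @prod_lap_shift R m l2 zmb s3 l2P.
  rewrite X1E in Hp1.
  apply: (@le_trans _ _ (expR (A / l1 + \sum_(v < m) `|tnth s2 v| / l2 v +
      \sum_(v < m) `|tnth s3 v| / l2 v) * dens (tadd zg s1) (tadd zmg s2) (tadd zmb s3))).
    rewrite !expRD /dens.
    set p1 := \prod_(_ < _) _ in Hp1 *; set p2 := \prod_(_ < _) _ in Hp2 *.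
    set p3 := \prod_(_ < _) _ in Hp3 *.
    set q1 := \prod_(_ < _) _ in Hp1 *; set q2 := \prod_(_ < _) _ in Hp2 *.
    set q3 := \prod_(_ < _) _ in Hp3 *.
    have p10 : 0 <= p1 by apply: prodr_ge0 => i _; exact: (@lap_ge0 R l1 _ l1P).
    have p20 : 0 <= p2 by apply: prodr_ge0 => i _; exact: (@lap_ge0 R (l2 i) _ (l2P i)).
    have p30 : 0 <= p3 by apply: prodr_ge0 => i _; exact: (@lap_ge0 R (l2 i) _ (l2P i)).
    set a1 := expR (A / l1) in Hp1 *.
    set a2 := expR (\sum_(v < m) _) in Hp2 *.
    set a3 := expR (\sum_(v < m) _) in Hp3 *.
    have -> : a1 * a2 * a3 * (q1 * q2 * q3) = (a1 * q1) * (a2 * q2) * (a3 * q3) by ring.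
    apply: ler_pM => //; first by apply: mulr_ge0.
    exact: ler_pM.
  apply: ler_wpM2r; first exact: dens0.
  by rewrite ler_expR.
pose Fd (E : set (noise_space R n m)) (a : n.-tuple R) (b c : m.-tuple R) : \bar R :=
  ((\1_E ((a, b, c) : noise_space R n m))
     * (\prod_(e < n) lap_pdf (3 * alpha / eps) (tnth a e))
     * (\prod_(v < m) lap_pdf (3 * alpha / ((nlev P v)%:R * eps)) (tnth b v))
     * (\prod_(v < m) lap_pdf (3 * alpha / ((nlev P v)%:R * eps)) (tnth c v)))%:E.
have FdE E a b c : Fd E a b c = ((\1_E ((a, b, c) : noise_space R n m)) * dens a b c)%:E.
  by rewrite /Fd /dens !mulrA.
have Fd0 E a b c : (0 <= Fd E a b c)%E.
  by rewrite FdE lee_fin mulr_ge0 // indicE ler0n.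
set E := mplo_out P sel D @^-1` O.
set E' := mplo_out P sel D' @^-1` O.
have Hind a b c : \1_E ((a, b, c) : noise_space R n m) =
    \1_E' ((tadd a s1, tadd b s2, tadd c s3) : noise_space R n m) :> R.
  rewrite !indicE.
  suff -> : (((a, b, c) : noise_space R n m) \in E) =
            (((tadd a s1, tadd b s2, tadd c s3) : noise_space R n m) \in E') by [].
  apply/idP/idP => /set_mem H; apply/mem_set; move: H; rewrite /E /E' /preimage /=.
    by rewrite Hout.
  by rewrite Hout.
have Hpt a b c : (Fd E a b c <= (expR eps)%:E * Fd E' (tadd a s1) (tadd b s2) (tadd c s3))%E.
  rewrite !FdE -EFinM lee_fin Hind.
  set i' := \1_E' _.
  have -> : expR eps * (i' * dens (tadd a s1) (tadd b s2) (tadd c s3)) =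
            i' * (expR eps * dens (tadd a s1) (tadd b s2) (tadd c s3)) by ring.
  apply: ler_wpM2l.
    by rewrite /i' indicE ler0n.
  exact: densB.
rewrite /mplo_noise_prob.
change (iint3 (Fd E) <= (expR eps)%:E * iint3 (Fd E'))%E.
have L1 := @iint3_le R n m (Fd E)
  (fun a b c => (expR eps)%:E * Fd E' (tadd a s1) (tadd b s2) (tadd c s3))%E (Fd0 E) Hpt.
have L2 := @iint3_scale R n m (expR eps) (fun a b c => Fd E' (tadd a s1) (tadd b s2) (tadd c s3))
  (expR_gt0 _) (fun a b c => Fd0 E' _ _ _).
rewrite (@iint3_shift R n m s1 s2 s3 (Fd E') (Fd0 E')) in L2.
exact: (le_trans L1 L2).
Qed.
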